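(* For every $n\ge 0$ the Jones–Wenzl projector $\mathrm{j}_n\in\mathrm{End}_{\mathcal{TL}_0(\Bbbk)}(\mathbf n)$ is idempotent: $\mathrm{j}_n\circ\mathrm{j}_n=\mathrm{j}_n$.
   Context: $\Bbbk$ is a field. $\mathcal{TL}_0(\Bbbk)$ is the strict $\Bbbk$-linear monoidal category with objects $\mathbf 0,\mathbf 1,\dots$, $\mathbf m\otimes\mathbf n=\mathbf{m+n}$, generated by $\mathrm{cup}:\mathbf 0\to\mathbf 2$ and $\mathrm{cap}:\mathbf 2\to\mathbf 0$ subject to $(\mathrm{id}_{\mathbf 1}\otimes\mathrm{cap})\circ(\mathrm{cup}\otimes\mathrm{id}_{\mathbf 1})=0=(\mathrm{cap}\otimes\mathrm{id}_{\mathbf 1})\circ(\mathrm{id}_{\mathbf 1}\otimes\mathrm{cup})$ and $\mathrm{cap}\circ\mathrm{cup}=\mathrm{id}_{\mathbf 0}$. A subset $I\subseteq\{1,\dots,n\}$ is apt if $n\notin I$ and $i\in I$ implies $i-1,i+1\notin I$. For apt $I$, $\mathrm{cap}_{I,n}:\mathbf n\to\mathbf{n-2|I|}$ is the diagram with a cap joining strands $i$ and $i+1$ for each $i\in I$ and through-strands elsewhere, and $\mathrm{cup}_{I,n}:\mathbf{n-2|I|}\to\mathbf n$ is its reflection (cups in the same positions). Define $\mathrm{j}_n=\sum_{I\subseteq\{1,\dots,n\}\text{ apt}}(-1)^{|I|}\,\mathrm{cup}_{I,n}\circ\mathrm{cap}_{I,n}$. *)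

(* Defs.v *)
(* The category TL_0(k) is encoded by its presentation:
   morphisms are formal k-linear combinations of (untyped) syntax terms built
   from identities, cup, cap, composition and tensor product, modulo the
   smallest k-linear congruence containing the strict monoidal category axioms
   and the three defining relations of TL_0(k). *)
From mathcomp Require Import all_boot all_order all_algebra.
Set Implicit Arguments. Unset Strict Implicit. Unset Printing Implicit Defensive.
Import GRing.Theory.
Local Open Scope ring_scope.

(* Syntax of morphisms.  TComp f g  means  f \o g  (g first). *)
Inductive tl_term : Type :=
| TId of nat
| TCup
| TCap
| TComp of tl_term & tl_term
| TTens of tl_term & tl_term.

Fixpoint ty (t : tl_term) : option (nat * nat) :=
  match t with
  | TId n => Some (n, n)
  | TCup => Some (0%N, 2%N)
  | TCap => Some (2%N, 0%N)
  | TComp f g =>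
      match ty f, ty g with
      | Some (b, c), Some (a, b') => if b == b' then Some (a, c) else None
      | _, _ => None
      end
  | TTens f g =>
      match ty f, ty g with
      | Some (a, b), Some (c, d) => Some ((a + c)%N, (b + d)%N)
      | _, _ => None
      end
  end.

Definition typed (t : tl_term) : Prop := exists mn, ty t = Some mn.

Inductive tl_ax : tl_term -> tl_term -> Prop :=
| ax_comp_assoc f g h : typed (TComp (TComp f g) h) ->
    tl_ax (TComp (TComp f g) h) (TComp f (TComp g h))
| ax_comp_idl f m n : ty f = Some (m, n) -> tl_ax (TComp (TId n) f) f
| ax_comp_idr f m n : ty f = Some (m, n) -> tl_ax (TComp f (TId m)) f
| ax_tens_assoc f g h : typed f -> typed g -> typed h ->
    tl_ax (TTens (TTens f g) h) (TTens f (TTens g h))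
| ax_tens_unitl f : typed f -> tl_ax (TTens (TId 0) f) f
| ax_tens_unitr f : typed f -> tl_ax (TTens f (TId 0)) f
| ax_tens_id m n : tl_ax (TTens (TId m) (TId n)) (TId (m + n))
| ax_interchange f g f' g' : typed (TComp f f') -> typed (TComp g g') ->
    tl_ax (TComp (TTens f g) (TTens f' g')) (TTens (TComp f f') (TComp g g'))
| ax_circle : tl_ax (TComp TCap TCup) (TId 0).

(* The zigzag relations of TL_0: these morphisms are 0. *)
Inductive tl_ax0 : tl_term -> Prop :=
| ax_zigzag1 : tl_ax0 (TComp (TTens (TId 1) TCap) (TTens TCup (TId 1)))
| ax_zigzag2 : tl_ax0 (TComp (TTens TCap (TId 1)) (TTens (TId 1) TCup)).

Section Lin.
Variable k : fieldType.

Definition lincomb := seq (k * tl_term).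

Definition scale_lc (c : k) (l : lincomb) : lincomb :=
  [seq (c * p.1, p.2) | p <- l].
Definition comp_lc (l1 l2 : lincomb) : lincomb :=
  [seq (p.1 * q.1, TComp p.2 q.2) | p <- l1, q <- l2].
Definition tens_lc (l1 l2 : lincomb) : lincomb :=
  [seq (p.1 * q.1, TTens p.2 q.2) | p <- l1, q <- l2].

Inductive tl_eq : lincomb -> lincomb -> Prop :=
| tl_refl l : tl_eq l l
| tl_sym l l' : tl_eq l l' -> tl_eq l' l
| tl_trans l1 l2 l3 : tl_eq l1 l2 -> tl_eq l2 l3 -> tl_eq l1 l3
| tl_cat l1 l1' l2 l2' : tl_eq l1 l1' -> tl_eq l2 l2' ->
    tl_eq (l1 ++ l2) (l1' ++ l2')
| tl_swap x y : tl_eq [:: x; y] [:: y; x]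
| tl_merge a b t : tl_eq [:: (a, t); (b, t)] [:: (a + b, t)]
| tl_zero t : tl_eq [:: (0, t)] [::]
| tl_scale c l l' : tl_eq l l' -> tl_eq (scale_lc c l) (scale_lc c l')
| tl_compl t l l' : tl_eq l l' ->
    tl_eq (comp_lc [:: (1, t)] l) (comp_lc [:: (1, t)] l')
| tl_compr t l l' : tl_eq l l' ->
    tl_eq (comp_lc l [:: (1, t)]) (comp_lc l' [:: (1, t)])
| tl_tensl t l l' : tl_eq l l' ->
    tl_eq (tens_lc [:: (1, t)] l) (tens_lc [:: (1, t)] l')
| tl_tensr t l l' : tl_eq l l' ->
    tl_eq (tens_lc l [:: (1, t)]) (tens_lc l' [:: (1, t)])
| tl_ax_eq s t : tl_ax s t -> tl_eq [:: (1, s)] [:: (1, t)]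
| tl_ax0_eq s : tl_ax0 s -> tl_eq [:: (1, s)] [::].

End Lin.

(* Strands are numbered 0..n-1 here (strand i+1 of the paper). *)
Definition apt (n : nat) (I : {set 'I_n}) : bool :=
  [forall i : 'I_n, (i \in I) ==>
     ((i.+1 < n)%N && [forall j in I, val j != i.+1])].

(* strands i, i+1, ..., i+m-1 ; P j : a cap (resp. cup) starts at strand j *)
Fixpoint capT_aux (P : nat -> bool) (i m : nat) : tl_term :=
  match m with
  | 0 => TId 0
  | 1 => TId 1
  | S ((S m') as m1) =>
      if P i then TTens TCap (capT_aux P i.+2 m')
      else TTens (TId 1) (capT_aux P i.+1 m1)
  end.

Fixpoint cupT_aux (P : nat -> bool) (i m : nat) : tl_term :=
  match m with
  | 0 => TId 0
  | 1 => TId 1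
  | S ((S m') as m1) =>
      if P i then TTens TCup (cupT_aux P i.+2 m')
      else TTens (TId 1) (cupT_aux P i.+1 m1)
  end.

Definition inI (n : nat) (I : {set 'I_n}) (j : nat) : bool :=
  [exists i in I, val i == j].

(* cap_{I,n} : n -> n - 2|I|   and   cup_{I,n} : n - 2|I| -> n *)
Definition cap_I (n : nat) (I : {set 'I_n}) : tl_term := capT_aux (inI I) 0 n.
Definition cup_I (n : nat) (I : {set 'I_n}) : tl_term := cupT_aux (inI I) 0 n.

Definition jw (k : fieldType) (n : nat) : lincomb k :=
  [seq ((-1) ^+ #|J|, TComp (cup_I J) (cap_I J)) |
     J : {set 'I_n} <- enum [pred J : {set 'I_n} | apt J]].

(* Main.v *)
From HB Require Import structures.
Require Import Defs.
From mathcomp Require Import all_boot all_order all_algebra.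
From Stdlib Require Import Setoid Morphisms.
Set Implicit Arguments. Unset Strict Implicit. Unset Printing Implicit Defensive.
Import GRing.Theory.
Local Open Scope ring_scope.

Fixpoint tleqb (s t : tl_term) : bool :=
  match s, t with
  | TId m, TId n => m == n
  | TCup, TCup => true
  | TCap, TCap => true
  | TComp a b, TComp c d => tleqb a c && tleqb b d
  | TTens a b, TTens c d => tleqb a c && tleqb b d
  | _, _ => false
  end.

Lemma tleqP : Equality.axiom tleqb.
Proof.
elim=> [m|||a IHa b IHb|a IHa b IHb] [n|||c d|c d] /=; try by constructor.
- by apply: (iffP eqP) => [->|[]].
- by case: (IHa c) => [->|ne]; case: (IHb d) => [->|ne']; constructor; congruence.
- by case: (IHa c) => [->|ne]; case: (IHb d) => [->|ne']; constructor; congruence.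
Qed.

HB.instance Definition _ := hasDecEq.Build tl_term tleqP.

Lemma two_step (Q : nat -> Prop) : Q 0%N -> Q 1%N -> (forall m, Q m -> Q m.+1 -> Q m.+2) -> forall m, Q m.
Proof.
move=> h0 h1 hs m; suff : Q m /\ Q m.+1 by case.
by elim: m => [|m [IH1 IH2]]; split => //; apply: hs.
Qed.

Lemma capS P i m : capT_aux P i m.+2 =
  if P i then TTens TCap (capT_aux P i.+2 m) else TTens (TId 1) (capT_aux P i.+1 m.+1).
Proof. by []. Qed.
Lemma cupS P i m : cupT_aux P i m.+2 =
  if P i then TTens TCup (cupT_aux P i.+2 m) else TTens (TId 1) (cupT_aux P i.+1 m.+1).
Proof. by []. Qed.

Lemma ty_aux P m : forall i, exists r, ty (capT_aux P i m) = Some (m, r) /\ ty (cupT_aux P i m) = Some (r, m).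
Proof.
elim/two_step: m => [i|i|m IH1 IH2 i]; first by exists 0%N.
  by exists 1%N.
rewrite capS cupS; case: (P i).
  by have [r [h1 h2]] := IH1 i.+2; exists r; rewrite /= h1 h2.
by have [r [h1 h2]] := IH2 i.+1; exists r.+1; rewrite /= h1 h2.
Qed.

Lemma cap_shift P m : forall i, capT_aux P i.+1 m = capT_aux (fun j => P j.+1) i m.
Proof.
elim/two_step: m => [i|i|m IH1 IH2 i] //.
by rewrite !capS IH1 IH2.
Qed.

Lemma cup_shift P m : forall i, cupT_aux P i.+1 m = cupT_aux (fun j => P j.+1) i m.
Proof.
elim/two_step: m => [i|i|m IH1 IH2 i] //.
by rewrite !cupS IH1 IH2.
Qed.

Lemma cap_ext P Q m : P =1 Q -> forall i, capT_aux P i m = capT_aux Q i m.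
Proof.
move=> h; elim/two_step: m => [i|i|m IH1 IH2 i] //.
by rewrite !capS IH1 IH2 h.
Qed.

Lemma cup_ext P Q m : P =1 Q -> forall i, cupT_aux P i m = cupT_aux Q i m.
Proof.
move=> h; elim/two_step: m => [i|i|m IH1 IH2 i] //.
by rewrite !cupS IH1 IH2 h.
Qed.

Fixpoint pats (n : nat) : seq (seq bool) :=
  match n with
  | 0 => [:: [::]]
  | 1 => [:: [:: false]]
  | S ((S m) as m1) => map (cons false) (pats m1) ++ map (fun s => true :: false :: s) (pats m)
  end.

Definition aptn (s : seq bool) : bool :=
  all (fun i => nth false s i ==> (i.+1 < size s)%N && ~~ nth false s i.+1) (iota 0 (size s)).

Lemma aptn_cons b t : aptn (b :: t) =
  (b ==> (0 < size t)%N && ~~ nth false t 0) && aptn t.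
Proof.
rewrite /aptn /=.
have -> : iota 1 (size t) = map (addn 1) (iota 0 (size t)) by rewrite -iotaDl.
rewrite all_map ltnS; congr andb.
Qed.

Lemma mem_pats n s : (s \in pats n) = (size s == n) && aptn s.
Proof.
elim/two_step: n s => [s|s|m IH1 IH2 s].
- by case: s => [|b t]; rewrite ?inE //=.
- case: s => [|b [|c t]]; rewrite ?inE /= //; first by case: b.

rewrite /= mem_cat; case: s => [|b t]; first by apply/negbTE; rewrite negb_or; apply/andP; split; apply/mapP => -[x _].
rewrite aptn_cons; case: b => /=.
  have -> : (true :: t \in [seq false :: i | i <- pats m.+1]) = false.
    by apply/mapP => -[x _].
  case: t => [|c t] /=; first by apply/mapP => -[x _].
  rewrite aptn_cons /=; case: c => /=; first by rewrite andbF; apply/mapP => -[x _].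
  rewrite mem_map; last by move=> ? ? [].
  by rewrite IH1 eqSS.
have -> : (false :: t \in [seq true :: false :: s | s <- pats m]) = false.
  by apply/mapP => -[x _].
rewrite orbF mem_map; last by move=> ? ? [].
by rewrite IH2.
Qed.

Lemma uniq_pats n : uniq (pats n).
Proof.
elim/two_step: n => // m IH1 IH2.
change (pats m.+2) with (map (cons false) (pats m.+1) ++ map (fun s => true :: false :: s) (pats m)).
rewrite cat_uniq !map_inj_uniq ?IH1 ?IH2; try by move=> ? ? [].
rewrite /= andbT; apply/hasPn => x /mapP [s _ ->]; apply/mapP => -[y _] //.
Qed.

Definition toSeq n (J : {set 'I_n}) : seq bool := [seq i \in J | i <- enum 'I_n].

Lemma size_toSeq n (J : {set 'I_n}) : size (toSeq J) = n.
Proof. by rewrite size_map size_enum_ord. Qed.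

Lemma inI_lt n (J : {set 'I_n}) j (h : (j < n)%N) : inI J j = (Ordinal h \in J).
Proof.
apply/existsP/idP => [[i /andP [iJ /eqP ij]]|hJ].
  by have -> : Ordinal h = i by apply: val_inj; rewrite /= ij.
by exists (Ordinal h); rewrite hJ eqxx.
Qed.

Lemma inI_ge n (J : {set 'I_n}) j : (n <= j)%N -> inI J j = false.
Proof.
move=> h; apply/existsP => -[i /andP [_ /eqP ij]].
by move: (ltn_ord i); rewrite ij ltnNge h.
Qed.

Lemma nth_toSeq n (J : {set 'I_n}) j : nth false (toSeq J) j = inI J j.
Proof.
case: (ltnP j n) => h.
  rewrite (nth_map (Ordinal h)) ?size_enum_ord // (inI_lt J h).
  by have := nth_ord_enum (Ordinal h) (Ordinal h) => /= ->.
by rewrite nth_default ?size_toSeq // inI_ge.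
Qed.

Lemma card_toSeq n (J : {set 'I_n}) : #|J| = count id (toSeq J).
Proof. by rewrite count_map cardE /enum_mem size_filter (@eq_filter _ _ predT) // filter_predT. Qed.

Lemma toSeq_inj n : injective (@toSeq n).
Proof.
move=> J1 J2 h; apply/setP => i.
move: (congr1 (fun s => nth false s (val i)) h) => /=.
rewrite !nth_toSeq !(inI_lt _ (ltn_ord i)).
by have -> : Ordinal (ltn_ord i) = i by apply: val_inj.
Qed.

Lemma apt_toSeq n (J : {set 'I_n}) : apt J = aptn (toSeq J).
Proof.
rewrite /aptn size_toSeq; apply/forallP/allP => h i.
  rewrite mem_iota add0n => /= hin.
  have := h (Ordinal hin); rewrite !nth_toSeq (inI_lt J hin).
  case: (Ordinal hin \in J) => //= /andP [h1 /forallP h2]; rewrite h1 /=.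
  rewrite (inI_lt J h1); apply/negP => hJ.
  by have := h2 (Ordinal h1); rewrite hJ /= eqxx.
have := h i; rewrite mem_iota add0n ltn_ord => /(_ isT).
rewrite !nth_toSeq (inI_lt J (ltn_ord i)).
have -> : Ordinal (ltn_ord i) = i by apply: val_inj.
case: (i \in J) => //= /andP [h1 h2]; rewrite h1 /=.
apply/forallP => j; apply/implyP => jJ; apply/eqP => ji.
move: h2; rewrite (inI_lt J h1); have -> : Ordinal h1 = j by apply: val_inj; rewrite /= -ji.
by rewrite jJ.
Qed.

Lemma perm_toSeq n : perm_eq (map (@toSeq n) (enum [pred J : {set 'I_n} | apt J])) (pats n).
Proof.
apply: uniq_perm; first by rewrite (map_inj_uniq (@toSeq_inj n)) enum_uniq.
  exact: uniq_pats.
move=> s; rewrite mem_pats; apply/mapP/andP => [[J hJ ->]|[/eqP hs ha]].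
  by rewrite size_toSeq -apt_toSeq; rewrite mem_enum in hJ.
have eJ : toSeq [set i : 'I_n | nth false s i] = s.
  apply: (@eq_from_nth _ false); first by rewrite size_toSeq hs.
  move=> i; rewrite size_toSeq => hi; rewrite nth_toSeq (inI_lt _ hi) inE //.
exists [set i : 'I_n | nth false s i] => //.
by rewrite mem_enum inE apt_toSeq eJ.
Qed.

Section S.
Variable k : fieldType.
Local Notation lc := (lincomb k).
Local Notation "a =~ b" := (@tl_eq k a b) (at level 70).

#[local] Instance tl_equiv : Equivalence (@tl_eq k).
Proof. split; [exact: tl_refl|exact: tl_sym|exact: tl_trans]. Qed.

#[local] Instance cat_proper : Proper (@tl_eq k ==> @tl_eq k ==> @tl_eq k) cat.
Proof. by move=> ? ? ? ? ? ?; apply: tl_cat. Qed.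

#[local] Instance scale_proper c : Proper (@tl_eq k ==> @tl_eq k) (scale_lc c).
Proof. by move=> ? ? ?; apply: tl_scale. Qed.

Lemma move_front (l2 l3 : lc) x : l2 ++ x :: l3 =~ x :: l2 ++ l3.
Proof.
elim: l2 => [|y l2 IH] //=; first reflexivity.
change (y :: l2 ++ x :: l3) with ([:: y] ++ (l2 ++ x :: l3)).
rewrite IH. change ([:: y] ++ x :: l2 ++ l3) with ([:: y; x] ++ (l2 ++ l3)).
rewrite (tl_swap y x). reflexivity.
Qed.

Lemma perm_tl (l l' : lc) : perm_eq l l' -> l =~ l'.
Proof.
elim: l l' => [|x l IH] l'.
  by rewrite perm_sym => /perm_nilP ->; reflexivity.
move=> pl; have xin : x \in l' by rewrite -(perm_mem pl) mem_head.
move: pl; case/splitPr: xin => l2 l3 pl.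
rewrite move_front.
have pl' : perm_eq l (l2 ++ l3).
  rewrite -(perm_cons x) (permPl pl).
  by have /permPl := perm_catCA l2 [:: x] l3.
change (x :: l) with ([:: x] ++ l); rewrite (IH _ pl'); reflexivity.
Qed.


Definition teq (s t : tl_term) := [:: ((1:k), s)] =~ [:: (1, t)].
Definition tz (t : tl_term) := [:: ((1:k), t)] =~ [::].

#[local] Instance teq_equiv : Equivalence teq.
Proof. split; rewrite /teq; [move=> ?; reflexivity|move=> ? ? ?; symmetry; done
  |move=> ? ? ? h1 h2; etransitivity; eassumption]. Qed.

#[local] Instance TComp_proper : Proper (teq ==> teq ==> teq) TComp.
Proof.
move=> a b hab c d hcd; rewrite /teq.
transitivity [:: ((1:k), TComp a d)].
  have := tl_compl a hcd; rewrite /comp_lc /= mulr1; done.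
have := tl_compr d hab; rewrite /comp_lc /= mulr1; done.
Qed.

#[local] Instance TTens_proper : Proper (teq ==> teq ==> teq) TTens.
Proof.
move=> a b hab c d hcd; rewrite /teq.
transitivity [:: ((1:k), TTens a d)].
  have := tl_tensl a hcd; rewrite /tens_lc /= mulr1; done.
have := tl_tensr d hab; rewrite /tens_lc /= mulr1; done.
Qed.

Lemma teq_c c s t : teq s t -> [:: (c, s)] =~ [:: (c, t)].
Proof. by move=> h; have := tl_scale c h; rewrite /scale_lc /= mulr1. Qed.

Lemma tz_c c t : tz t -> [:: (c, t)] =~ [::].
Proof. by move=> h; have := tl_scale c h; rewrite /scale_lc /= mulr1. Qed.

Lemma tz_teq s t : teq s t -> tz t -> tz s.
Proof. by rewrite /tz /teq => h1 h2; rewrite h1. Qed.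

Lemma tz_compl u t : tz t -> tz (TComp u t).
Proof. by move=> h; have := tl_compl u h; rewrite /comp_lc /= mulr1. Qed.
Lemma tz_compr u t : tz t -> tz (TComp t u).
Proof. by move=> h; have := tl_compr u h; rewrite /comp_lc /= mulr1. Qed.
Lemma tz_tensl u t : tz t -> tz (TTens u t).
Proof. by move=> h; have := tl_tensl u h; rewrite /tens_lc /= mulr1. Qed.
Lemma tz_tensr u t : tz t -> tz (TTens t u).
Proof. by move=> h; have := tl_tensr u h; rewrite /tens_lc /= mulr1. Qed.

Lemma map_teq (T : eqType) (s : seq T) (f g : T -> k * tl_term) :
  {in s, forall x, (f x).1 = (g x).1 /\ teq (f x).2 (g x).2} -> map f s =~ map g s.
Proof.
elim: s => [|x s IH] h /=; first reflexivity.
change (f x :: map f s) with ([:: f x] ++ map f s).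
change (g x :: map g s) with ([:: g x] ++ map g s).
have [h1 h2] := h x (mem_head _ _).
rewrite IH; last by move=> y ys; apply: h; rewrite inE ys orbT.
case: (f x) (g x) h1 h2 => [c t] [c' t'] /= <- h2.
by apply: (tl_cat (teq_c c h2) (tl_refl _)).
Qed.

Lemma map_tz (T : eqType) (s : seq T) (f : T -> k * tl_term) :
  {in s, forall x, tz (f x).2} -> map f s =~ [::].
Proof.
elim: s => [|x s IH] h /=; first reflexivity.
change (f x :: map f s) with ([:: f x] ++ map f s).
rewrite IH; last by move=> y ys; apply: h; rewrite inE ys orbT.
have := h x (mem_head _ _); case: (f x) => c t /= /(tz_c c) ->; reflexivity.
Qed.

Lemma comp_lc_cons p (L M : lc) : comp_lc (p :: L) M = comp_lc [:: p] M ++ comp_lc L M.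
Proof. by rewrite /comp_lc /= cats0. Qed.
Lemma tens_lc_cons p (L M : lc) : tens_lc (p :: L) M = tens_lc [:: p] M ++ tens_lc L M.
Proof. by rewrite /tens_lc /= cats0. Qed.

Lemma comp_lc1 c t (M : lc) : comp_lc [:: (c, t)] M = scale_lc c (comp_lc [:: (1, t)] M).
Proof. by rewrite /comp_lc /scale_lc /= !cats0 -map_comp; apply: eq_map => q /=; rewrite mul1r. Qed.
Lemma tens_lc1 c t (M : lc) : tens_lc [:: (c, t)] M = scale_lc c (tens_lc [:: (1, t)] M).
Proof. by rewrite /tens_lc /scale_lc /= !cats0 -map_comp; apply: eq_map => q /=; rewrite mul1r. Qed.

Lemma comp_lc1r c t (L : lc) : comp_lc L [:: (c, t)] = scale_lc c (comp_lc L [:: (1, t)]).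
Proof.
rewrite /comp_lc /scale_lc !allpairs1r -map_comp.
 by apply: eq_map => q /=; rewrite mulr1 mulrC.
Qed.
Lemma tens_lc1r c t (L : lc) : tens_lc L [:: (c, t)] = scale_lc c (tens_lc L [:: (1, t)]).
Proof.
rewrite /tens_lc /scale_lc !allpairs1r -map_comp.
 by apply: eq_map => q /=; rewrite mulr1 mulrC.
Qed.

Lemma comp_lc_consr q (L M : lc) : comp_lc L (q :: M) =~ comp_lc L [:: q] ++ comp_lc L M.
Proof. apply: perm_tl; rewrite /comp_lc; by have /permPl := perm_allpairs_catr (fun (p : k * tl_term) (q : k * tl_term) => (p.1 * q.1, TComp p.2 q.2)) L (fun=> [:: q]) (fun=> M). Qed.
Lemma tens_lc_consr q (L M : lc) : tens_lc L (q :: M) =~ tens_lc L [:: q] ++ tens_lc L M.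
Proof. apply: perm_tl; rewrite /tens_lc; by have /permPl := perm_allpairs_catr (fun (p : k * tl_term) (q : k * tl_term) => (p.1 * q.1, TTens p.2 q.2)) L (fun=> [:: q]) (fun=> M). Qed.

#[local] Instance comp_lc_proper : Proper (@tl_eq k ==> @tl_eq k ==> @tl_eq k) (@comp_lc k).
Proof.
move=> L L' hL M M' hM; transitivity (comp_lc L M').
  elim: L {hL L'} => [|[c t] L IH]; first by rewrite /comp_lc /tens_lc /=; apply: tl_refl.
  rewrite (comp_lc_cons _ L M) (comp_lc_cons _ L M'); apply: tl_cat; last exact: IH; rewrite (comp_lc1 c t M) (comp_lc1 c t M'); apply: tl_scale; exact: tl_compl.
elim: M' {hM M} => [|[c t] M IH]; first by rewrite /comp_lc !allpairs0r; apply: tl_refl.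
apply: tl_trans (comp_lc_consr _ _ _) _; apply: tl_trans (tl_sym (comp_lc_consr _ _ _)).
apply: tl_cat; last exact: IH; rewrite (comp_lc1r c t L) (comp_lc1r c t L'); apply: tl_scale; exact: tl_compr.
Qed.

#[local] Instance tens_lc_proper : Proper (@tl_eq k ==> @tl_eq k ==> @tl_eq k) (@tens_lc k).
Proof.
move=> L L' hL M M' hM; transitivity (tens_lc L M').
  elim: L {hL L'} => [|[c t] L IH]; first by rewrite /comp_lc /tens_lc /=; apply: tl_refl.
  rewrite (tens_lc_cons _ L M) (tens_lc_cons _ L M'); apply: tl_cat; last exact: IH; rewrite (tens_lc1 c t M) (tens_lc1 c t M'); apply: tl_scale; exact: tl_tensl.
elim: M' {hM M} => [|[c t] M IH]; first by rewrite /tens_lc !allpairs0r; apply: tl_refl.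
apply: tl_trans (tens_lc_consr _ _ _) _; apply: tl_trans (tl_sym (tens_lc_consr _ _ _)).
apply: tl_cat; last exact: IH; rewrite (tens_lc1r c t L) (tens_lc1r c t L'); apply: tl_scale; exact: tl_tensr.
Qed.


#[local] Instance tz_proper : Proper (teq ==> iff) tz.
Proof. by move=> a b h; split; [apply: tz_teq; symmetry|apply: tz_teq]. Qed.

Ltac tyd := rewrite /typed /=;
  repeat (match goal with H : ty ?x = _ |- context[ty ?x] => rewrite H /= end);
  rewrite ?eqxx /=; eexists; reflexivity.

Lemma e_assoc f g h : typed (TComp (TComp f g) h) -> teq (TComp (TComp f g) h) (TComp f (TComp g h)).
Proof. by move=> H; apply: tl_ax_eq; apply: ax_comp_assoc. Qed.

Lemma e_idl n f : typed (TComp (TId n) f) -> teq (TComp (TId n) f) f.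
Proof.
move=> [mn] /=; case E: (ty f) => [[a b]|] //.
case: (n =P b) => [eq|] //.
move=> _; subst; by apply: tl_ax_eq; apply: ax_comp_idl E.
Qed.

Lemma e_idr n f : typed (TComp f (TId n)) -> teq (TComp f (TId n)) f.
Proof.
move=> [mn] /=; case E: (ty f) => [[a b]|] //.
case: (a =P n) => [eq|] //.
move=> _; subst; by apply: tl_ax_eq; apply: ax_comp_idr E.
Qed.

Lemma e_tassoc f g h : typed (TTens (TTens f g) h) -> teq (TTens (TTens f g) h) (TTens f (TTens g h)).
Proof.
move=> [mn] /=; case Ef: (ty f) => [[a b]|] //; case Eg: (ty g) => [[c d]|] //;
  case Eh: (ty h) => [[e e']|] // _.
by apply: tl_ax_eq; apply: ax_tens_assoc; eexists; eassumption.
Qed.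

Lemma e_tid m n : teq (TTens (TId m) (TId n)) (TId (m + n)).
Proof. by apply: tl_ax_eq; apply: ax_tens_id. Qed.

Lemma e_inter f g f' g' : typed (TComp f f') -> typed (TComp g g') ->
  teq (TComp (TTens f g) (TTens f' g')) (TTens (TComp f f') (TComp g g')).
Proof. by move=> H1 H2; apply: tl_ax_eq; apply: ax_interchange. Qed.

Lemma e_circ : teq (TComp TCap TCup) (TId 0).
Proof. by apply: tl_ax_eq; apply: ax_circle. Qed.

Lemma e_zig1 : tz (TComp (TTens (TId 1) TCap) (TTens TCup (TId 1))).
Proof. by apply: tl_ax0_eq; constructor. Qed.
Lemma e_zig2 : tz (TComp (TTens TCap (TId 1)) (TTens (TId 1) TCup)).
Proof. by apply: tl_ax0_eq; constructor. Qed.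

Arguments e_assoc : clear implicits.
Arguments e_idl : clear implicits.
Arguments e_idr : clear implicits.
Arguments e_tassoc : clear implicits.
Arguments e_inter : clear implicits.
Arguments e_assoc f g h {H}.
Arguments e_idl n f {H}.
Arguments e_idr n f {H}.
Arguments e_tassoc f g h {H}.
Arguments e_inter f g f' g' {H1 H2}.

Definition E := TComp TCup TCap.

Lemma EE : teq (TComp E E) E.
Proof.
rewrite /E (e_assoc TCup TCap); last tyd.
rewrite -(e_assoc TCap TCup TCap); last tyd.
rewrite e_circ (e_idl 0 TCap); last tyd. reflexivity.
Qed.


Lemma H_l n x y : typed (TComp x y) ->
  teq (TTens (TId n) (TComp x y)) (TComp (TTens (TId n) x) (TTens (TId n) y)).
Proof.
move=> h; rewrite (e_inter (TId n) x (TId n) y); try tyd; last exact: h.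
rewrite (e_idl n (TId n)); try tyd. reflexivity.
Qed.

Lemma H_r n x y : typed (TComp x y) ->
  teq (TTens (TComp x y) (TId n)) (TComp (TTens x (TId n)) (TTens y (TId n))).
Proof.
move=> h; rewrite (e_inter x (TId n) y (TId n)); try tyd; last exact: h.
rewrite (e_idl n (TId n)); try tyd. reflexivity.
Qed.

Arguments H_l n x y _ : clear implicits.
Arguments H_r n x y _ : clear implicits.

Lemma Z1 m b c : ty c = Some (m, m) -> ty b = Some (m.+1, m.+1) ->
  tz (TComp (TTens (TId 1) (TTens E c)) (TTens E b)).
Proof.
move=> hc hb.
have s1 : teq (TTens E b) (TComp (TTens E (TId m.+1)) (TTens (TId 2) b)).
  rewrite (e_inter E (TId m.+1) (TId 2) b); try tyd.
  rewrite (e_idr 2 E); try tyd. rewrite (e_idl m.+1 b); try tyd. reflexivity.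
rewrite s1 -(e_assoc (TTens (TId 1) (TTens E c)) (TTens E (TId m.+1)) (TTens (TId 2) b)); try tyd.
apply: tz_compr.
rewrite -(e_tassoc (TId 1) E c); try tyd.
change (TId m.+1) with (TId (1 + m)).
rewrite -(e_tid 1 m) -(e_tassoc E (TId 1) (TId m)); try tyd.
rewrite (e_inter (TTens (TId 1) E) c (TTens E (TId 1)) (TId m)); try tyd.
apply: tz_tensr.
rewrite /E (H_l 1 TCup TCap); try tyd. rewrite (H_r 1 TCup TCap); try tyd.
rewrite (e_assoc (TTens (TId 1) TCup) (TTens (TId 1) TCap)); try tyd.
rewrite -(e_assoc (TTens (TId 1) TCap) (TTens TCup (TId 1))); try tyd.
apply: tz_compl; apply: tz_compr; exact: e_zig1.
Qed.

Lemma Z2 m b c : ty c = Some (m, m) -> ty b = Some (m.+1, m.+1) ->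
  tz (TComp (TTens E b) (TTens (TId 1) (TTens E c))).
Proof.
move=> hc hb.
have s1 : teq (TTens E b) (TComp (TTens (TId 2) b) (TTens E (TId m.+1))).
  rewrite (e_inter (TId 2) b E (TId m.+1)); try tyd.
  rewrite (e_idl 2 E); try tyd. rewrite (e_idr m.+1 b); try tyd. reflexivity.
rewrite s1 (e_assoc (TTens (TId 2) b) (TTens E (TId m.+1)) (TTens (TId 1) (TTens E c))); try tyd.
apply: tz_compl.
rewrite -(e_tassoc (TId 1) E c); try tyd.
change (TId m.+1) with (TId (1 + m)).
rewrite -(e_tid 1 m) -(e_tassoc E (TId 1) (TId m)); try tyd.
rewrite (e_inter (TTens E (TId 1)) (TId m) (TTens (TId 1) E) c); try tyd.
apply: tz_tensr.
rewrite /E (H_l 1 TCup TCap); try tyd. rewrite (H_r 1 TCup TCap); try tyd.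
rewrite (e_assoc (TTens TCup (TId 1)) (TTens TCap (TId 1))); try tyd.
rewrite -(e_assoc (TTens TCap (TId 1)) (TTens (TId 1) TCup)); try tyd.
apply: tz_compl; apply: tz_compr; exact: e_zig2.
Qed.


Definition lty (L : lc) a b := all (fun p => ty p.2 == Some (a, b)) L.

Lemma ltyP (L : lc) a b p : lty L a b -> p \in L -> ty p.2 = Some (a, b).
Proof. by move=> /allP h /h /eqP. Qed.

Lemma allpairs_teq (S T : eqType) (s : seq S) (t : seq T) (f g : S -> T -> k * tl_term) :
  (forall x y, x \in s -> y \in t -> (f x y).1 = (g x y).1 /\ teq (f x y).2 (g x y).2) ->
  [seq f x y | x <- s, y <- t] =~ [seq g x y | x <- s, y <- t].
Proof.
elim: s => [|x s IH] h /=; first exact: tl_refl.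
apply: tl_cat.
  by apply: map_teq => y hy; apply: h => //; exact: mem_head.
by apply: IH => x' y hx hy; apply: h => //; rewrite inE hx orbT.
Qed.

Lemma allpairs_tz (S T : eqType) (s : seq S) (t : seq T) (f : S -> T -> k * tl_term) :
  (forall x y, x \in s -> y \in t -> tz (f x y).2) ->
  [seq f x y | x <- s, y <- t] =~ [::].
Proof.
elim: s => [|x s IH] h /=; first exact: tl_refl.
apply: (@tl_cat _ _ [::] _ [::]).
  by apply: map_tz => y hy; apply: h => //; exact: mem_head.
by apply: IH => x' y hx hy; apply: h => //; rewrite inE hx orbT.
Qed.

Lemma comp_catl (L1 L2 M : lc) : comp_lc (L1 ++ L2) M = comp_lc L1 M ++ comp_lc L2 M.
Proof. exact: allpairs_cat. Qed.

Lemma comp_catr (L M1 M2 : lc) : comp_lc L (M1 ++ M2) =~ comp_lc L M1 ++ comp_lc L M2.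
Proof.
apply: perm_tl; rewrite /comp_lc.
by have /permPl := perm_allpairs_catr (fun (p : k * tl_term) (q : k * tl_term) => (p.1 * q.1, TComp p.2 q.2)) L (fun=> M1) (fun=> M2).
Qed.

Lemma comp_scalel c (L M : lc) : comp_lc (scale_lc c L) M = scale_lc c (comp_lc L M).
Proof.
rewrite /comp_lc /scale_lc allpairs_mapl map_allpairs.
by apply: eq_allpairs => p q /=; rewrite mulrA.
Qed.

Lemma comp_scaler c (L M : lc) : comp_lc L (scale_lc c M) = scale_lc c (comp_lc L M).
Proof.
rewrite /comp_lc /scale_lc allpairs_mapr map_allpairs.
by apply: eq_allpairs => p q /=; rewrite mulrCA.
Qed.

Lemma scale_cat c (L M : lc) : scale_lc c (L ++ M) = scale_lc c L ++ scale_lc c M.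
Proof. exact: map_cat. Qed.

Lemma scaleNN (L : lc) : scale_lc (-1) (scale_lc (-1) L) = L.
Proof.
rewrite /scale_lc -map_comp -[RHS]map_id; apply: eq_map => -[c t] /=.
by rewrite mulrA mulN1r opprK mul1r.
Qed.

Lemma cancelN (L : lc) : L ++ scale_lc (-1) L =~ [::].
Proof.
elim: L => [|[c t] L IH] /=; first exact: tl_refl.
apply: tl_trans (_ : [:: (c, t); (-1 * c, t)] ++ (L ++ scale_lc (-1) L) =~ _).
  change ([:: (c, t)] ++ (L ++ (-1 * c, t) :: scale_lc (-1) L) =~
          [:: (c, t)] ++ ((-1 * c, t) :: L ++ scale_lc (-1) L)).
  by apply: tl_cat; [exact: tl_refl|exact: move_front].
apply: (@tl_cat _ _ [::] _ [::]) IH.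
apply: tl_trans (tl_merge _ _ _) _.
by rewrite mulN1r subrr; exact: tl_zero.
Qed.

Lemma tens_comp (x y : tl_term) (L M : lc) n : typed (TComp x y) -> lty L n n -> lty M n n ->
  comp_lc (tens_lc [:: (1, x)] L) (tens_lc [:: (1, y)] M) =~
  tens_lc [:: (1, TComp x y)] (comp_lc L M).
Proof.
move=> hxy hL hM.
rewrite /comp_lc /tens_lc !allpairs1l allpairs_mapl allpairs_mapr map_allpairs.
apply: allpairs_teq => p q hp hq /=; split; first by rewrite !mul1r.
have tp := ltyP hL hp; have tq := ltyP hM hq.
rewrite (e_inter x p.2 y q.2); [reflexivity|exact: hxy|tyd].
Qed.

Lemma comp_idl (L : lc) a n : lty L a n -> comp_lc [:: (1, TId n)] L =~ L.
Proof.
move=> hL; rewrite /comp_lc allpairs1l -[X in _ =~ X]map_id.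
apply: map_teq => q hq /=; split; first by rewrite mul1r.
have tq := ltyP hL hq; rewrite (e_idl n q.2); [reflexivity|tyd].
Qed.

Lemma comp_idr (L : lc) n b : lty L n b -> comp_lc L [:: (1, TId n)] =~ L.
Proof.
move=> hL; rewrite /comp_lc (allpairs1r (fun (p : k * tl_term) (q : k * tl_term) => (p.1 * q.1, TComp p.2 q.2)) L (fun=> (1, TId n))).
rewrite -[X in _ =~ X]map_id.
apply: map_teq => q hq /=; split; first by rewrite mulr1.
have tq := ltyP hL hq; rewrite (e_idr n q.2); [reflexivity|tyd].
Qed.

Lemma tens_assoc1 (x y : tl_term) (L : lc) a b c d n m : ty x = Some (a, b) -> ty y = Some (c, d) ->
  lty L n m ->
  tens_lc [:: (1, x)] (tens_lc [:: (1, y)] L) =~ tens_lc [:: (1, TTens x y)] L.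
Proof.
move=> hx hy hL; rewrite /tens_lc !allpairs1l -map_comp.
apply: map_teq => q hq /=; split; first by rewrite !mul1r.
have tq := ltyP hL hq; rewrite -(e_tassoc x y q.2); [reflexivity|tyd].
Qed.

Lemma tens_cat1 p (L M : lc) : tens_lc [:: p] (L ++ M) = tens_lc [:: p] L ++ tens_lc [:: p] M.
Proof. by rewrite /tens_lc !allpairs1l map_cat. Qed.

Lemma tens_scale1 p c (L : lc) : tens_lc [:: p] (scale_lc c L) = scale_lc c (tens_lc [:: p] L).
Proof.
rewrite /tens_lc /scale_lc !allpairs1l -!map_comp; apply: eq_map => q /=.
by rewrite mulrCA.
Qed.

Lemma lty_tens1 x (L : lc) a b c d : ty x = Some (a, b) -> lty L c d ->
  lty (tens_lc [:: (1, x)] L) (a + c) (b + d).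
Proof.
move=> hx hL; rewrite /lty /tens_lc allpairs1l all_map; apply/allP => q hq /=.
by rewrite hx (ltyP hL hq).
Qed.


Lemma Zlist1 (C B : lc) m : lty C m m -> lty B m.+1 m.+1 ->
  comp_lc (tens_lc [:: (1, TId 1)] (tens_lc [:: (1, E)] C)) (tens_lc [:: (1, E)] B) =~ [::].
Proof.
move=> hC hB; rewrite /comp_lc /tens_lc !allpairs1l !allpairs_mapl !allpairs_mapr.
apply: allpairs_tz => p q hp hq /=; exact: Z1 (ltyP hC hp) (ltyP hB hq).
Qed.

Lemma Zlist2 (C B : lc) m : lty C m m -> lty B m.+1 m.+1 ->
  comp_lc (tens_lc [:: (1, E)] B) (tens_lc [:: (1, TId 1)] (tens_lc [:: (1, E)] C)) =~ [::].
Proof.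
move=> hC hB; rewrite /comp_lc /tens_lc !allpairs1l !allpairs_mapl !allpairs_mapr.
apply: allpairs_tz => p q hp hq /=; exact: Z2 (ltyP hC hq) (ltyP hB hp).
Qed.

Lemma tyE : ty E = Some (2, 2). Proof. by []. Qed.

Lemma main_abstract (A : nat -> lc) :
  (forall n, lty (A n) n n) ->
  A 0 =~ [:: (1, TId 0)] -> A 1 =~ [:: (1, TId 1)] ->
  (forall n, A n.+2 =~ tens_lc [:: (1, TId 1)] (A n.+1) ++
                       scale_lc (-1) (tens_lc [:: (1, E)] (A n))) ->
  forall n, comp_lc (A n) (A n) =~ A n.
Proof.
move=> hty h0 h1 hrec.
have base0 : comp_lc (A 0) (A 0) =~ A 0.
  by rewrite h0; apply: (comp_idl (a:=0)).
have base1 : comp_lc (A 1) (A 1) =~ A 1.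
  by rewrite h1; apply: (comp_idl (a:=1)).
have e2 : [:: ((1:k), TTens (TId 1) (TId 1))] =~ [:: (1, TId 2)] := e_tid 1 1.
have II : forall n, comp_lc (A n) (A n) =~ A n ->
   comp_lc (tens_lc [:: (1, TId 1)] (A n.+1)) (tens_lc [:: (1, E)] (A n)) =~ tens_lc [:: (1, E)] (A n) /\
   comp_lc (tens_lc [:: (1, E)] (A n)) (tens_lc [:: (1, TId 1)] (A n.+1)) =~ tens_lc [:: (1, E)] (A n).
  move=> [|m] IHn.
    have t2 : tens_lc [:: (1, TId 1)] [:: ((1:k), TId 1)] =~ [:: (1, TId 2)].
      by rewrite /tens_lc /= mulr1; exact: e2.
    have lQ : lty (tens_lc [:: (1, E)] (A 0)) 2 2 := lty_tens1 tyE (hty 0).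
    rewrite h1 t2; split; first exact: (comp_idl (a:=2)).
    exact: (comp_idr (b:=2)).
  have X : tens_lc [:: (1, TId 1)] (A m.+2) =~
      tens_lc [:: (1, TId 2)] (A m.+1) ++
      scale_lc (-1) (tens_lc [:: (1, TId 1)] (tens_lc [:: (1, E)] (A m))).
    rewrite hrec tens_cat1 tens_scale1 (@tens_assoc1 (TId 1) (TId 1) (A m.+1) 1 1 1 1 m.+1 m.+1) //.
    by rewrite e2; reflexivity.
  have e2E : [:: ((1:k), TComp (TId 2) E)] =~ [:: (1, E)] by apply: (e_idl 2 E); tyd.
  have eE2 : [:: ((1:k), TComp E (TId 2))] =~ [:: (1, E)] by apply: (e_idr 2 E); tyd.
  rewrite X; split.
    rewrite comp_catl comp_scalel (Zlist1 (hty m) (hty m.+1)) /= cats0.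
    rewrite (tens_comp (n:=m.+1)) //; last tyd.
    by rewrite IHn e2E; reflexivity.
  rewrite comp_catr comp_scaler (Zlist2 (hty m) (hty m.+1)) /= cats0.
  rewrite (tens_comp (n:=m.+1)) //; last tyd.
  by rewrite IHn eE2; reflexivity.
suff H : forall n, comp_lc (A n) (A n) =~ A n /\ comp_lc (A n.+1) (A n.+1) =~ A n.+1.
  by move=> n; case: (H n).
elim=> [|n [IH0 IH1]]; first by split.
split=> //.
have [IIa IIb] := II n IH0.
have e11 : [:: ((1:k), TComp (TId 1) (TId 1))] =~ [:: (1, TId 1)] by apply: (e_idl 1 (TId 1)); tyd.
rewrite hrec.
set P := tens_lc _ (A n.+1); set Q := tens_lc _ (A n).
rewrite comp_catl (comp_catr P P) (comp_catr (scale_lc (-1) Q) P).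
rewrite !comp_scalel !comp_scaler scaleNN IIa IIb.
rewrite /P /Q (tens_comp (n:=n.+1)) //; last tyd.
rewrite (tens_comp (n:=n)) //; last tyd.
have eEE : [:: ((1:k), TComp E E)] =~ [:: (1, E)] := EE.
rewrite IH0 IH1 e11 eEE -/P -/Q.
rewrite -catA; apply: tl_cat; first exact: tl_refl.
rewrite -[X in _ =~ X]cats0; apply: tl_cat; first exact: tl_refl.
apply: tl_trans _ (cancelN Q); apply: perm_tl; by have /permPl := perm_catC (scale_lc (-1) Q) Q.
Qed.


Arguments capT_aux : simpl never.
Arguments cupT_aux : simpl never.

Definition G n (s : seq bool) : k * tl_term :=
  ((-1) ^+ count id s, TComp (cupT_aux (nth false s) 0 n) (capT_aux (nth false s) 0 n)).
Definition A n := map (G n) (pats n).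

Lemma jw_A n : jw k n =~ A n.
Proof.
rewrite /jw /A.
have -> : [seq ((-1) ^+ #|J|, TComp (cup_I J) (cap_I J)) | J : {set 'I_n} <- enum [pred J : {set 'I_n} | apt J]]
   = map (G n) (map (@toSeq n) (enum [pred J : {set 'I_n} | apt J])).
  rewrite -map_comp; apply: eq_map => J /=.
  rewrite /G card_toSeq /cup_I /cap_I -(cup_ext n (nth_toSeq J) 0) -(cap_ext n (nth_toSeq J) 0).
  by [].
apply: perm_tl; rewrite perm_map //; exact: perm_toSeq.
Qed.

Lemma tyG n s : ty (G n s).2 = Some (n, n).
Proof. by have [r [h1 h2]] := ty_aux (nth false s) n 0; rewrite /= h1 h2 eqxx. Qed.

Lemma lty_A n : lty (A n) n n.
Proof. by rewrite /lty all_map; apply/allP => s _; apply/eqP; exact: tyG. Qed.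

Lemma A0 : A 0 =~ [:: (1, TId 0)].
Proof. by rewrite /A /G /= expr0; apply: (e_idl 0 (TId 0)); tyd. Qed.

Lemma A1 : A 1 =~ [:: (1, TId 1)].
Proof. by rewrite /A /G /= expr0; apply: (e_idl 1 (TId 1)); tyd. Qed.

Lemma Arec n : A n.+2 =~ tens_lc [:: (1, TId 1)] (A n.+1) ++
                       scale_lc (-1) (tens_lc [:: (1, E)] (A n)).
Proof.
rewrite /A.
change (pats n.+2) with (map (cons false) (pats n.+1) ++ map (fun s => true :: false :: s) (pats n)).
rewrite map_cat; apply: tl_cat.
  rewrite /tens_lc allpairs1l -!map_comp; apply: map_teq => s _ /=.
  split; first by rewrite add0n mul1r.
  rewrite capS cupS /= cap_shift cup_shift.
  rewrite (cap_ext (P := fun j => nth false (false :: s) j.+1) (Q := nth false s)) //.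
  rewrite (cup_ext (P := fun j => nth false (false :: s) j.+1) (Q := nth false s)) //.
  have [r [h1 h2]] := ty_aux (nth false s) n.+1 0.
  rewrite (e_inter (TId 1) _ (TId 1) _); try tyd.
  rewrite (e_idl 1 (TId 1)); try tyd. reflexivity.
rewrite /scale_lc /tens_lc allpairs1l -!map_comp; apply: map_teq => s _ /=.
split; first by rewrite add0n exprS mul1r.
rewrite capS cupS /= !cap_shift !cup_shift.
rewrite (cap_ext (P := fun j => nth false [:: true, false & s] j.+2) (Q := nth false s)) //.
rewrite (cup_ext (P := fun j => nth false [:: true, false & s] j.+2) (Q := nth false s)) //.
have [r [h1 h2]] := ty_aux (nth false s) n 0.
rewrite (e_inter TCup _ TCap _); try tyd. reflexivity.
Qed.

Lemma main_k n : tl_eq (comp_lc (jw k n) (jw k n)) (jw k n).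
Proof.
rewrite (jw_A n).
apply: main_abstract.
- exact: lty_A.
- exact: A0.
- exact: A1.
- exact: Arec.
Qed.

End S.

Theorem mainTheorem5 (k : fieldType) (n : nat) :
  tl_eq (comp_lc (jw k n) (jw k n)) (jw k n).
Proof. exact: main_k. Qed.
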